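(* Let $x,y\in S_n$. Any directed path $\gamma$ from $x$ to $y$ in the Bruhat graph $\Gamma$ is contained in at most one hypercube (subgraph of $\Gamma$ isomorphic to some $\mathcal{H}_m$) whose bottom vertex is $x$ and whose top vertex is $y$.
   Context: $S_n$ is the symmetric group with length function $\ell$ (with respect to simple reflections $s_i=(i\ i{+}1)$) and $T$ its set of transpositions. The Bruhat graph $\Gamma$ is the directed graph on $S_n$ with an edge $w\to tw$ whenever $t\in T$ and $\ell(w)<\ell(tw)$. The hypercube graph $\mathcal{H}_m$ is the directed graph given by the Hasse diagram of the Boolean lattice of subsets of an $m$-element set (edges $A\to A\cup\{a\}$); an $m$-hypercube is a subgraph of $\Gamma$ isomorphic to $\mathcal{H}_m$, and its bottom and top vertices are the images of $\varnothing$ and of the full set. *)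

(* Defs.v *)
From mathcomp Require Import all_boot all_order all_fingroup.
Set Implicit Arguments. Unset Strict Implicit. Unset Printing Implicit Defensive.

(* S_n = 'S_n, permutations of 'I_n = {0,...,n-1}.
   Group product in mathcomp: (u * v)%g x = v (u x), i.e. u*v = v o u. *)

Definition is_simple_refl (n : nat) (s : 'S_n) : bool :=
  [exists i : 'I_n, exists j : 'I_n, (val j == (val i).+1) && (s == tperm i j)].

Definition is_transposition (n : nat) (t : 'S_n) : bool :=
  [exists i : 'I_n, exists j : 'I_n, (i != j) && (t == tperm i j)].

Definition word_prod (n : nat) (ws : seq 'S_n) : 'S_n := (\prod_(s <- ws) s)%g.

Definition is_length (n : nat) (w : 'S_n) (k : nat) : Prop :=
  (exists ws : seq 'S_n,
      [/\ all (@is_simple_refl n) ws, size ws = k & word_prod ws = w]) /\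
  (forall ws : seq 'S_n, all (@is_simple_refl n) ws -> word_prod ws = w ->
      k <= size ws).

(* Bruhat graph: edge w -> t w  (t w = t o w = (w * t)%g) with t in T and
   ell(w) < ell(t w). *)
Definition bruhat_edge (n : nat) (w v : 'S_n) : Prop :=
  exists t : 'S_n, [/\ is_transposition t, v = (w * t)%g &
    exists k1 k2, [/\ is_length w k1, is_length v k2 & k1 < k2]].

Fixpoint bruhat_path (n : nat) (x : 'S_n) (p : seq 'S_n) : Prop :=
  match p with
  | [::] => True
  | y :: p' => bruhat_edge x y /\ bruhat_path y p'
  end.

(* a subgraph of Gamma is given by a vertex set V and an edge set E.
   (V, E) is an m-hypercube with bottom x and top y: there is an isomorphism
   phi from the Hasse diagram H_m of the Boolean lattice of subsets of 'I_m
   onto (V, E), (V, E) is a subgraph of Gamma, phi(empty) = x, phi(full) = y. *)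
Definition is_hypercube (n m : nat) (V : {set 'S_n}) (E : {set 'S_n * 'S_n})
    (x y : 'S_n) : Prop :=
  exists phi : {set 'I_m} -> 'S_n,
    [/\ injective phi,
        V = [set phi A | A : {set 'I_m}],
        E = [set (phi A, phi (a |: A)) | A : {set 'I_m}, a : 'I_m in ~: A] /\
          (forall e, e \in E -> bruhat_edge e.1 e.2),
        phi set0 = x & phi setT = y].

Fixpoint path_in (n : nat) (V : {set 'S_n}) (E : {set 'S_n * 'S_n})
    (x : 'S_n) (p : seq 'S_n) : bool :=
  match p with
  | [::] => x \in V
  | y :: p' => (x \in V) && ((x, y) \in E) && path_in V E y p'
  end.

(* Main.v *)
Require Import Defs.
From mathcomp Require Import all_boot all_order all_fingroup.
From mathcomp Require Import zify.
Set Implicit Arguments. Unset Strict Implicit. Unset Printing Implicit Defensive.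

Definition Inv (n : nat) (g : 'S_n) : {set 'I_n * 'I_n} :=
  [set pq : 'I_n * 'I_n | (pq.1 < pq.2)%N && (g pq.2 < g pq.1)%N].
Definition ninv (n : nat) (g : 'S_n) := #|Inv g|.

Lemma tpE (n : nat) (i j x : 'I_n) :
  tperm i j x = if x == i then j else if x == j then i else x.
Proof.
case: eqP => [->|xi]; first by rewrite tpermL.
case: eqP => [->|xj]; first by rewrite tpermR.
by apply: tpermD; apply/eqP => e; [apply: xi|apply: xj].
Qed.

Ltac ordneq := repeat match goal with
 | H : is_true (~~ (?x == ?y)) |- _ => move: H; rewrite -val_eqE /= => /eqP H
 | H : is_true (_ || _) |- _ => case/orP: H => H
 | H : is_true (_ && _) |- _ => case/andP: H => ? ?
 end.

Section H.
Variables (n : nat) (i j : 'I_n) (g : 'S_n).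
Hypothesis ij : (i < j)%N.
Let tau := tperm i j.
Definition hh (pq : 'I_n * 'I_n) : 'I_n * 'I_n :=
  if ((i < pq.2 < j) || (i < pq.1 < j))%N then pq else (tau pq.1, tau pq.2).

Lemma hh_inv : involutive hh.
Proof.
case=> p q; rewrite /hh /=.
have tbt : forall x : 'I_n, (i < tau x < j)%N = (i < x < j)%N.
  move=> x; rewrite /tau tpE; case: eqP => [->|_]; first lia.
  case: eqP => [->|_]; lia.
case c: ((i < q < j) || (i < p < j))%N => /=; first by rewrite c.
by rewrite !tbt c /tau !tpermK.
Qed.

Hypothesis hb : (g j < g i)%N || (nat_of_ord j == (nat_of_ord i).+1).

Lemma hh_sub : forall pq, pq \in Inv (tau * g)%g -> pq != (i, j) ->
  hh pq \in Inv g :\ (i, j).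
Proof.
case=> p q; rewrite !inE /= !permM /tau => /andP [pq gq] ne; move: pq ne gq.
rewrite /hh /=.
have ijn : i != j by apply/eqP => e; subst; lia.
rewrite !tpE.
case: (eqVneq p i) => [->|pi]; [|case: (eqVneq p j) => [->|pj]];
(case: (eqVneq q i) => [->|qi]; [|case: (eqVneq q j) => [->|qj]]); try lia.
all: rewrite ?eqxx ?(negbTE ijn) ?(negbTE pi) ?(negbTE qi) ?(negbTE pj) ?(negbTE qj) /= => pq ne gq.
all: rewrite ?tpermL ?tpermR ?tpE ?eqxx ?(negbTE ijn) ?(negbTE pi) ?(negbTE qi) ?(negbTE pj) ?(negbTE qj) /=.
all: case: ifP => c; rewrite /= ?xpair_eqE ?eqxx ?(negbTE ijn) ?(negbTE pi) ?(negbTE qi) ?(negbTE pj) ?(negbTE qj) /= ?andbF ?andbT.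
all: try (apply/andP; split); try lia.
all: try (case/orP: hb => /eqP ?; lia).
all: try (rewrite xpair_eqE in ne; move: ne; rewrite ?eqxx //).
all: rewrite ?(negbTE qj) ?(negbTE pi) /= => _; try (apply/andP; split); try lia; try (move/negbT: c => c); try lia; ordneq; case/orP: hb => [?|/eqP ?]; lia.
Qed.
Lemma S_card : #|Inv (tau * g)%g :\ (i, j)| <= #|Inv g :\ (i, j)|.
Proof.
rewrite -(card_imset _ (inv_inj hh_inv)); apply: subset_leq_card.
apply/subsetP => _ /imsetP [pq /setD1P [ne inI] ->]; exact: hh_sub.
Qed.
End H.

Lemma H1 n (i j : 'I_n) (g : 'S_n) : (i < j)%N -> (g j < g i)%N ->
  ninv (tperm i j * g)%g < ninv g.
Proof.
move=> ij gji; have := @S_card n i j g ij; rewrite gji /= => /(_ isT).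
rewrite /ninv (cardsD1 (i, j) (Inv g)) (cardsD1 (i, j) (Inv _)) !inE /= !permM tpermL tpermR.
have -> : (i < j)%N && (g i < g j)%N = false by lia.
by rewrite ij gji.
Qed.

Lemma H2 n (i j : 'I_n) (g : 'S_n) : nat_of_ord j = (nat_of_ord i).+1 ->
  ninv (tperm i j * g)%g <= (ninv g).+1.
Proof.
move=> ij; have ij' : (i < j)%N by lia.
have := @S_card n i j g ij'; rewrite ij eqxx orbT => /(_ isT).
rewrite /ninv (cardsD1 (i, j) (Inv g)) (cardsD1 (i, j) (Inv _)).
case: ((i, j) \in Inv g); case: ((i, j) \in Inv _); rewrite /=; move=> h; apply: leq_trans (leq_add (leqnn _) h) _; rewrite ?add0n ?add1n ?ltnS ?leqnSn ?leqnn //; apply: leqW; apply: leqnSn.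
Qed.


Lemma word_rcons n (ws : seq 'S_n) s : word_prod (rcons ws s) = (word_prod ws * s)%g.
Proof. by rewrite /word_prod -cats1 big_cat big_seq1. Qed.

Lemma simpleP n (s : 'S_n) : is_simple_refl s ->
  exists i j : 'I_n, nat_of_ord j = (nat_of_ord i).+1 /\ s = tperm i j.
Proof.
by case/existsP => i /existsP [j /andP [/eqP ji /eqP ->]]; exists i, j; split.
Qed.

Lemma simple_tperm n (i j : 'I_n) : nat_of_ord j = (nat_of_ord i).+1 -> is_simple_refl (tperm i j).
Proof. by move=> ji; apply/existsP; exists i; apply/existsP; exists j; apply/andP; split; apply/eqP. Qed.

Lemma ninv1 n : ninv (1 : 'S_n)%g = 0.
Proof. by apply/eqP; rewrite cards_eq0; apply/eqP/setP => pq; rewrite !inE !perm1; lia. Qed.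

Lemma word_lb n (ws : seq 'S_n) : all (@is_simple_refl n) ws ->
  ninv (word_prod ws)^-1 <= size ws.
Proof.
elim/last_ind: ws => [|ws s IH]; first by rewrite /word_prod big_nil invg1 /ninv
  => _; rewrite leqn0 cards_eq0; apply/eqP/setP => pq; rewrite !inE !perm1; lia.
rewrite all_rcons => /andP [/simpleP [i [j [ji ->]]] /IH h].
rewrite word_rcons invMg tpermV size_rcons.
apply: leq_trans (H2 _ ji) _; by rewrite ltnS.
Qed.

Lemma incr_id n (g : 'S_n) :
  (forall i j : 'I_n, nat_of_ord j = (nat_of_ord i).+1 -> g i < g j) -> g = 1%g.
Proof.
move=> H.
have up: forall k (x : 'I_n), nat_of_ord x = k -> k <= g x.
  elim=> [|k IH] x xk; first lia.
  have kn: k < n by have := ltn_ord x; lia.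
  have := H (Ordinal kn) x xk; have := IH (Ordinal kn) erefl; simpl; lia.
have down: forall k (x : 'I_n), nat_of_ord x + k = n.-1 -> g x <= x.
  elim=> [|k IH] x xk; first by have := ltn_ord (g x); lia.
  have kn: (nat_of_ord x).+1 < n by have := ltn_ord x; lia.
  have := H x (Ordinal kn) erefl; have := IH (Ordinal kn) (ltac:(simpl; lia)); simpl; lia.
apply/permP => x; rewrite perm1; apply/val_inj.
have := up _ x erefl; have := down (n.-1 - x) x (ltac:(have := ltn_ord x; lia)); simpl; lia.
Qed.

Lemma nodesc n (w : 'S_n) : ~~ [exists i : 'I_n, exists j : 'I_n,
     (nat_of_ord j == (nat_of_ord i).+1) && ((w^-1)%g j < (w^-1)%g i)%N] -> w = 1%g.
Proof.
move=> nod.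
    suff: (w^-1 = 1)%g by move/(congr1 (@invg _)); rewrite invgK invg1.
    apply: incr_id => i j ji; have : (w^-1)%g i != (w^-1)%g j.
      by rewrite (inj_eq perm_inj); apply/eqP => e; subst; lia.
    move: nod; rewrite negb_exists => /forallP /(_ i); rewrite negb_exists => /forallP /(_ j).
    move=> /negP h1 /eqP h2; case: (ltngtP ((w^-1)%g i) ((w^-1)%g j)) => // c.
      by exfalso; apply: h1; apply/andP; split => //; apply/eqP; exact: ji.
    by exfalso; apply: h2; apply: val_inj.
Qed.

Lemma word_exists n (w : 'S_n) : exists ws,
  [/\ all (@is_simple_refl n) ws, size ws = ninv (w^-1)%g & word_prod ws = w].
Proof.
move: {2}(ninv _) (erefl (ninv (w^-1)%g)) => k; elim: k w => [|k IH] w hk.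
all: have [/existsP [i /existsP [j /andP [/eqP ji gji]]] | nod] :=
  boolP [exists i : 'I_n, exists j : 'I_n,
     (nat_of_ord j == (nat_of_ord i).+1) && ((w^-1)%g j < (w^-1)%g i)%N].
- by have := H1 (ltac:(lia) : (i < j)%N) gji; rewrite hk.
- rewrite (nodesc nod).
  exists [::]; split => //; last by rewrite /word_prod big_nil.
  by rewrite invg1 ninv1.
-   have e : (tperm i j * w^-1)%g = (w * tperm i j)^-1%g by rewrite invMg tpermV.
  have h1 := H1 (ltac:(lia) : (i < j)%N) gji.
  have h2 := H2 (tperm i j * w^-1)%g ji; rewrite mulgA tperm2 mul1g in h2.
  have [ws [a1 a2 a3]] := IH (w * tperm i j)%g (ltac:(rewrite -e; lia)).
  exists (rcons ws (tperm i j)); split.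
  + by rewrite all_rcons a1 simple_tperm.
  + rewrite size_rcons a2 -e; lia.
  + by rewrite word_rcons a3 -mulgA tperm2 mulg1.
- by move: hk; rewrite (nodesc nod) invg1 ninv1.
Qed.

Lemma len_ninv n (w : 'S_n) k : is_length w k -> k = ninv (w^-1)%g.
Proof.
case=> [[ws [a s e]] mn]; have [ws' [a' s' e']] := word_exists w.
have := mn ws' a' e'; have := word_lb a; rewrite e; lia.
Qed.

Lemma edge_dir n (w v : 'S_n) : bruhat_edge w v -> exists e f : 'I_n,
  [/\ (e < f)%N, v = (w * tperm e f)%g & ((w^-1)%g e < (w^-1)%g f)%N].
Proof.
case=> t [/existsP [i /existsP [j /andP [ij /eqP ->]]] -> [k1 [k2 [l1 l2 lt]]]].
move/len_ninv: l1 => l1; move/len_ninv: l2 => l2.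
have key : forall a b : 'I_n, (a < b)%N -> tperm i j = tperm a b -> 
  exists e f : 'I_n, [/\ (e < f)%N, (w * tperm i j)%g = (w * tperm e f)%g
     & ((w^-1)%g e < (w^-1)%g f)%N].
  move=> a b ab tab; exists a, b; split => //; first by rewrite tab.
  case: (ltngtP ((w^-1)%g a) ((w^-1)%g b)) => // c.
    have := H1 ab c; rewrite -tab -tpermV -invMg -l2 -l1; lia.
  by move/val_inj/perm_inj: c => c; subst; lia.
case: (ltngtP i j) => c.
- exact: (key i j c erefl).
- by apply: key c _; rewrite tpermC.
- by move/val_inj: c => c; subst; rewrite eqxx in ij.
Qed.

Lemma len_uniq n (w : 'S_n) k1 k2 : is_length w k1 -> is_length w k2 -> k1 = k2.
Proof. by move=> /len_ninv -> /len_ninv ->. Qed.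

Ltac bash1 := match goal with
 | |- context [ (?x == ?y) ] => is_var x; is_var y;
   let H := fresh "H" in
   case: (eqVneq x y) => H; [subst | rewrite ?(negbTE H); rewrite eq_sym in H; rewrite ?(negbTE H)]
 end.
Ltac killneq := try (match goal with H : is_true (?x != ?x) |- _ => by rewrite eqxx in H end).
Ltac bash := rewrite ?tpE; repeat (rewrite ?eqxx /=; killneq; bash1); rewrite ?eqxx /=; killneq.
Ltac fin := try lia; try (move=> *; by split); try (move=> *; lia).

Definition mid n (G : 'S_n) (c : 'I_n -> 'I_n) (e f e' f' : 'I_n) : Prop :=
 [/\ (e < f)%N, (e' < f')%N, (G e < G f)%N, (G (tperm e f e') < G (tperm e f f'))%N
   & (forall x, c x = tperm e f (tperm e' f' x))] /\ ((e != e') || (f != f')).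

Lemma M1 n G c (e f e' f' : 'I_n) : mid G c e f e' f' ->
  [/\ c e != e, c f != f, c e' != e' & c f' != f'].
Proof.
case=> [[ef ef' _ _ hc] ne]; rewrite !hc; move: ne ef ef'.
bash.
all: fin.
Qed.

Definition disj n (e f e' f' : 'I_n) := [&& e != e', e != f', f != e' & f != f'].

Lemma M2 n G c (e f e' f' : 'I_n) : mid G c e f e' f' ->
  forall x, c x != x -> [|| x == e, x == f, x == e' | x == f'].
Proof.
case=> [[ef ef' _ _ hc] ne] x; rewrite !hc; move: ne ef ef'.
bash.
all: fin.
Qed.

Lemma M3 n G c (e f e' f' : 'I_n) : mid G c e f e' f' -> disj e f e' f' ->
  [/\ c e = f, c f = e, c e' = f' & c f' = e'].
Proof.
case=> [[ef ef' _ _ hc] ne]; rewrite /disj !hc; move: ne ef ef'.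
bash.
all: fin.
Qed.

Lemma M4 n G c (e f e' f' : 'I_n) : mid G c e f e' f' -> ~~ disj e f e' f' ->
  c (c e) != e.
Proof.
case=> [[ef ef' _ _ hc] ne]; rewrite /disj !hc; move: ne ef ef'.
bash.
all: fin.
Qed.

Lemma M5 n G c (e f e' f' : 'I_n) : mid G c e f e' f' -> disj e f e' f' ->
  forall x, c (c x) = x.
Proof.
case=> [[ef ef' _ _ hc] ne]; rewrite /disj => dj x; rewrite !hc; move: dj ne ef ef'.
bash.
all: fin.
Qed.

Lemma DD n G c (e f e' f' a b a' b' : 'I_n) : mid G c e f e' f' -> disj e f e' f' ->
  mid G c a b a' b' -> disj a b a' b' -> (a = e /\ b = f) \/ (a = e' /\ b = f').
Proof.
move=> m1 d1 m2 d2.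
have [ha _ _ _] := M1 m2; have := M2 m1 ha.
have [c1 c2 c3 c4] := M3 m1 d1; have [c5 _ _ _] := M3 m2 d2.
case: m1 => [[ef ef' _ _ _] _]; case: m2 => [[ab ab' _ _ _] _].
case/or4P => /eqP E; subst a.
- by left; rewrite -c5 c1.
- by exfalso; move: ab; rewrite -c5 c2; lia.
- by right; rewrite -c5 c3.
- by exfalso; move: ab; rewrite -c5 c4; lia.
Qed.

Lemma DO n G c (e f e' f' a b a' b' : 'I_n) : mid G c e f e' f' -> disj e f e' f' ->
  mid G c a b a' b' -> ~~ disj a b a' b' -> False.
Proof.
move=> m1 d1 m2 d2; have := M4 m2 d2; by rewrite (M5 m1 d1) eqxx.
Qed.

Lemma midcases n (G : 'S_n) c (p q r e f e' f' : 'I_n) : (p < q < r)%N ->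
  mid G c e f e' f' ->
  [|| e == p, e == q | e == r] -> [|| f == p, f == q | f == r] ->
  [|| e' == p, e' == q | e' == r] -> [|| f' == p, f' == q | f' == r] ->
  [\/ (e = p /\ f = q) /\ (G p < G q)%N, (e = q /\ f = r) /\ (G q < G r)%N |
      (e = p /\ f = r) /\ ((G r < G q)%N \/ (G q < G p)%N)].
Proof.
move=> pqr [[ef ef' ge gt _] ne].
case/or3P => /eqP ?; subst e; case/or3P => /eqP ?; subst f; try lia;
case/or3P => /eqP ?; subst e'; case/or3P => /eqP ?; subst f'; try lia;
move: ne ge gt; rewrite ?eqxx /=; try done.
all: bash.
all: try lia.
all: move=> *; first [by constructor 1 | by constructor 2 | (constructor 3; split => //; lia)].
Qed.


Definition in3 n (p q r x : 'I_n) := [|| x == p, x == q | x == r].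

Lemma mid_in3 n G c (p q r e f e' f' : 'I_n) :
  (forall x, c x != x -> in3 p q r x) -> mid G c e f e' f' ->
  [/\ in3 p q r e, in3 p q r f, in3 p q r e' & in3 p q r f'].
Proof. by move=> HD m; have [h1 h2 h3 h4] := M1 m; split; apply: HD. Qed.

Lemma Tri_sorted n G c (p q r : 'I_n) (e1 f1 e1' f1' e2 f2 e2' f2' e3 f3 e3' f3' : 'I_n) :
  (p < q < r)%N -> (forall x, c x != x -> in3 p q r x) ->
  mid G c e1 f1 e1' f1' -> mid G c e2 f2 e2' f2' -> mid G c e3 f3 e3' f3' ->
  (e1, f1) != (e2, f2) -> (e1, f1) != (e3, f3) -> (e2, f2) != (e3, f3) -> False.
Proof.
move=> pqr HD m1 m2 m3.
have [a1 b1 c1 d1] := mid_in3 HD m1; have [a2 b2 c2 d2] := mid_in3 HD m2;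
have [a3 b3 c3 d3] := mid_in3 HD m3.
have := midcases pqr m1 a1 b1 c1 d1; have := midcases pqr m2 a2 b2 c2 d2;
have := midcases pqr m3 a3 b3 c3 d3.
have ar : forall a b c : nat, (a < b)%N -> (b < c)%N -> (c < b)%N \/ (b < a)%N -> False.
  by move=> a b c' h1 h2 [h3|h3]; lia.
clear -ar.
case=> [[[-> ->] x1]|[[-> ->] x1]|[[-> ->] x1]]; case=> [[[-> ->] x2]|[[-> ->] x2]|[[-> ->] x2]];
  case=> [[[-> ->] x3]|[[-> ->] x3]|[[-> ->] x3]]; rewrite ?eqxx //= => *;
  first [exact: (ar _ _ _ x1 x2 x3) | exact: (ar _ _ _ x1 x3 x2) | exact: (ar _ _ _ x2 x1 x3)
        | exact: (ar _ _ _ x2 x3 x1) | exact: (ar _ _ _ x3 x1 x2) | exact: (ar _ _ _ x3 x2 x1)].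
Qed.

Lemma Tri n G c (p q r : 'I_n) (e1 f1 e1' f1' e2 f2 e2' f2' e3 f3 e3' f3' : 'I_n) :
  p != q -> p != r -> q != r -> (forall x, c x != x -> in3 p q r x) ->
  mid G c e1 f1 e1' f1' -> mid G c e2 f2 e2' f2' -> mid G c e3 f3 e3' f3' ->
  (e1, f1) != (e2, f2) -> (e1, f1) != (e3, f3) -> (e2, f2) != (e3, f3) -> False.
Proof.
move=> pq pr qr HD m1 m2 m3 n12 n13 n23.
have P : forall a b d : 'I_n, (a < b < d)%N -> (forall x, in3 p q r x -> in3 a b d x) -> False.
  move=> a b d abd H; apply: (Tri_sorted abd _ m1 m2 m3 n12 n13 n23) => x /HD; exact: H.
move: pq pr qr; rewrite -!val_eqE /= => pq pr qr.
case: (ltngtP p q) => pq'; case: (ltngtP p r) => pr'; case: (ltngtP q r) => qr';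
  try lia;
  first [ apply: (P p q r); [lia|] | apply: (P p r q); [lia|] | apply: (P q p r); [lia|]
        | apply: (P q r p); [lia|] | apply: (P r p q); [lia|] | apply: (P r q p); [lia|] ];
  move=> x; rewrite /in3; by case/or3P => ->; rewrite ?orbT.
Qed.

Lemma getO n G c (e f e' f' : 'I_n) : mid G c e f e' f' -> ~~ disj e f e' f' ->
  exists o, [/\ o != e, o != f &
     forall x, [|| x == e, x == f, x == e' | x == f'] -> in3 e f o x].
Proof.
case=> [[ef ef' _ _ _] ne]; rewrite /disj /in3.
case: (eqVneq e e') => [E|H1]; first subst e'.
  exists f'; split; [apply/eqP=> E; subst; lia| by move: ne; rewrite eqxx /= eq_sym |].
  by move=> x; case/or4P => ->; rewrite ?orbT.
case: (eqVneq e f') => [E|H2]; first subst f'.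
  exists e'; split; [apply/eqP=> E; subst; lia|apply/eqP=> E; subst; lia|].
  by move=> x; case/or4P => ->; rewrite ?orbT.
case: (eqVneq f e') => [E|H3]; first subst e'.
  exists f'; split; [apply/eqP=> E; subst; lia|apply/eqP=> E; subst; lia|].
  by move=> x; case/or4P => ->; rewrite ?orbT.
case: (eqVneq f f') => [E|H4]; first subst f'.
  exists e'; split; [by rewrite eq_sym|apply/eqP=> E; subst; lia|].
  by move=> x; case/or4P => ->; rewrite ?orbT.
by rewrite ?H1 ?H2 ?H3 ?H4.
Qed.

Lemma three_mid n G c (e1 f1 e1' f1' e2 f2 e2' f2' e3 f3 e3' f3' : 'I_n) :
  mid G c e1 f1 e1' f1' -> mid G c e2 f2 e2' f2' -> mid G c e3 f3 e3' f3' ->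
  (e1, f1) != (e2, f2) -> (e1, f1) != (e3, f3) -> (e2, f2) != (e3, f3) -> False.
Proof.
move=> m1 m2 m3 n12 n13 n23.
have [d1|d1] := boolP (disj e1 f1 e1' f1').
  have [d2|d2] := boolP (disj e2 f2 e2' f2'); last exact: DO m1 d1 m2 d2.
  have [d3|d3] := boolP (disj e3 f3 e3' f3'); last exact: DO m1 d1 m3 d3.
  case: (DD m1 d1 m2 d2) => [[E F]|[E2 F2]]; first by move: n12; rewrite E F eqxx.
  case: (DD m1 d1 m3 d3) => [[E F]|[E3 F3]]; first by move: n13; rewrite E F eqxx.
  by move: n23; rewrite E2 F2 E3 F3 eqxx.
have [d2|d2] := boolP (disj e2 f2 e2' f2'); first exact: DO m2 d2 m1 d1.
have [o [o1 o2 HO]] := getO m1 d1.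
have ef1 : e1 != f1 by case: (m1) => [[h _ _ _ _] _]; apply/negP => /eqP E; move: h; rewrite E; lia.
have o1' : e1 != o by rewrite eq_sym.
have o2' : f1 != o by rewrite eq_sym.
have HD : forall x, c x != x -> in3 e1 f1 o x by move=> x /(M2 m1) /HO.
exact: (Tri ef1 o1' o2' HD m1 m2 m3 n12 n13 n23).
Qed.

Lemma edge_len n (a b : 'S_n) : bruhat_edge a b -> ninv (a^-1)%g < ninv (b^-1)%g.
Proof.
by case=> t [_ _ [k1 [k2 [/len_ninv <- /len_ninv <- lt]]]].
Qed.

Lemma mk_mid n (u m w : 'S_n) : bruhat_edge u m -> bruhat_edge m w ->
  exists e f e' f', m = (u * tperm e f)%g /\
     mid (u^-1)%g (fun x => u ((w^-1)%g x)) e f e' f'.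
Proof.
move=> um mw; have l1 := edge_len um; have l2 := edge_len mw.
have [e [f [ef me G1]]] := edge_dir um.
have [e' [f' [ef' wm G2]]] := edge_dir mw.
exists e, f, e', f'; split => //; split; last first.
  case: (eqVneq e e') => [E|//]; case: (eqVneq f f') => [F|//]; subst e' f'.
  move: l1 l2; rewrite wm me -mulgA tperm2 mulg1; lia.
split => //.
- by move: G2; rewrite me invMg tpermV !permM.
- by move=> x; rewrite wm me !invMg !tpermV !permM permKV.
Qed.

Lemma square n (u v w z1 z2 : 'S_n) : bruhat_edge u v -> bruhat_edge v w ->
  bruhat_edge u z1 -> bruhat_edge z1 w -> bruhat_edge u z2 -> bruhat_edge z2 w ->
  v != z1 -> v != z2 -> z1 = z2.
Proof.
move=> e1 e2 e3 e4 e5 e6 n1 n2; apply/eqP/negP => n3.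
have [a1 [b1 [a1' [b1' [E1 M1]]]]] := mk_mid e1 e2.
have [a2 [b2 [a2' [b2' [E2 M2]]]]] := mk_mid e3 e4.
have [a3 [b3 [a3' [b3' [E3 M3]]]]] := mk_mid e5 e6.
apply: (three_mid M1 M2 M3); apply/negP => /eqP [A B]; subst.
- by rewrite eqxx in n1.
- by rewrite eqxx in n2.
- by rewrite eqxx in n3.
Qed.

Definition PP m (B : {set 'I_m}) : {set 'I_m * 'I_m} :=
  [set ab : 'I_m * 'I_m | [&& ab.1 \notin B, ab.2 \in B & (ab.1 < ab.2)%N]].

Definition init m k : {set 'I_m} := [set j : 'I_m | (j < k)%N].

Lemma PP_init m (B : {set 'I_m}) : PP B = set0 -> exists k, k <= m /\ B = init m k.
Proof.
move=> P0.
have noP : forall a b, a \notin B -> b \in B -> (a < b)%N -> False.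
  move=> a b aB bB ab; suff : (a, b) \in PP B by rewrite P0 inE.
  by rewrite inE /= aB bB ab.
case: (pickP (fun a => a \notin B)) => [a0 Ha0 | allin].
- case: (@arg_minnP _ a0 (fun i => i \notin B) (fun i : 'I_m => nat_of_ord i) Ha0) => a aB amin.
  exists a; split; first exact: ltnW (ltn_ord a).
  apply/setP => j; rewrite inE.
  case: (ltnP j a) => ja.
  + by apply/negPn/negP => jB; have := amin j jB; lia.
  + apply/negP => jB; case: (ltngtP a j) => aj.
    * exact: noP aB jB aj.
    * lia.
    * by move/val_inj: aj => aj; subst; rewrite jB in aB.
- exists m; split => //; apply/setP => j; rewrite inE ltn_ord.
  by have := allin j; rewrite /= => /negbFE.
Qed.

Lemma PP_decr m (B : {set 'I_m}) : PP B != set0 -> exists a b, [/\ a \notin B, b \in B,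
   #|PP (B :\ b)| < #|PP B|, #|PP (a |: (B :\ b))| < #|PP B| & #|PP (a |: B)| < #|PP B|].
Proof.
case/set0Pn => [[a0 b0]]; rewrite inE /= => /and3P [a0B b0B ab0].
case: (@arg_minnP _ a0 (fun i => i \notin B) (fun i : 'I_m => nat_of_ord i) a0B) => a aB amin.
case: (@arg_maxnP _ b0 (fun i => i \in B) (fun i : 'I_m => nat_of_ord i) b0B) => b bB bmax.
have ab : (a < b)%N by have := amin a0 a0B; have := bmax b0 b0B; lia.
have abn : a != b by apply/eqP => E; subst; lia.
have inab : (a, b) \in PP B by rewrite inE /= aB bB ab.
exists a, b; split => //; apply: proper_card; apply/properP; split; try (exists (a, b) => //).
- apply/subsetP => [[x y]]; rewrite !inE /= => /and3P [hx /andP [yb yB] xy].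
  rewrite yB xy !andbT; apply/negP => xB; move: hx; rewrite xB andbT negbK => /eqP E; subst x.
  by have := bmax y yB; lia.
- by rewrite !inE /= !eqxx /= ?andbF ?andbT.
- apply/subsetP => [[x y]]; rewrite !inE /= negb_or => /and3P [/andP [xa hx] hy xy].
  case/orP: hy => [/eqP E|/andP [yb yB]].
    subst y; exfalso; case: (eqVneq x b) => [E|xb]; first by subst; lia.
    by move: hx; rewrite xb /= => /amin; lia.
  rewrite yB xy !andbT; apply/negP => xB; move: hx; rewrite xB andbT negbK => /eqP E; subst x.
  by have := bmax y yB; lia.
- by rewrite !inE /= eqxx (negbTE abn) eq_sym (negbTE abn).
- apply/subsetP => [[x y]]; rewrite !inE /= negb_or => /and3P [/andP [xa xB] hy xy].
  rewrite xB xy !andbT; case/orP: hy => // /eqP E; subst y.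
  by have := amin x xB; lia.
- by rewrite !inE /= !eqxx /= ?andbF ?andbT.
Qed.

Lemma cube_unique n m (psi1 psi2 : {set 'I_m} -> 'S_n) :
  injective psi1 -> injective psi2 ->
  (forall (B : {set 'I_m}) b, b \notin B -> bruhat_edge (psi1 B) (psi1 (b |: B))) ->
  (forall (B : {set 'I_m}) b, b \notin B -> bruhat_edge (psi2 B) (psi2 (b |: B))) ->
  (forall k, k <= m -> psi1 (init m k) = psi2 (init m k)) ->
  forall B, psi1 B = psi2 B.
Proof.
move=> i1 i2 ed1 ed2 hi.
suff: forall N B, #|PP B| <= N -> psi1 B = psi2 B by move=> H B; exact: (H _ B (leqnn _)).
elim=> [|N IH] B hB.
  have : PP B = set0 by apply/eqP; rewrite -cards_eq0; lia.
  by case/PP_init => k [km ->]; exact: hi.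
have [P0|P0] := eqVneq (PP B) set0.
  by case/PP_init: P0 => k [km ->]; exact: hi.
have [a [b [aB bB l1 l2 l3]]] := PP_decr P0.
have e1 := IH (B :\ b) (ltac:(lia)).
have e2 := IH (a |: (B :\ b)) (ltac:(lia)).
have e3 := IH (a |: B) (ltac:(lia)).
have ab : a != b by apply/eqP => E; subst; rewrite bB in aB.
have aBb : a \notin B :\ b by rewrite !inE negb_and aB orbT.
have bBa : b \notin a |: (B :\ b) by rewrite !inE eqxx /= negb_or eq_sym ab.
have eq1 : b |: (a |: (B :\ b)) = a |: B by rewrite setUCA setD1K.
have eq2 : b |: (B :\ b) = B by rewrite setD1K.
have nB : a |: (B :\ b) != B by apply/eqP => E; move: aB; rewrite -E !inE eqxx.
apply: (@square n (psi1 (B :\ b)) (psi1 (a |: (B :\ b))) (psi1 (a |: B))).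
- exact: ed1.
- by rewrite -eq1; apply: ed1.
- by rewrite -{2}eq2; apply: ed1; rewrite !inE eqxx.
- exact: ed1.
- by rewrite e1 -{2}eq2; apply: ed2; rewrite !inE eqxx.
- by rewrite e3; apply: ed2.
- by rewrite (inj_eq i1).
- by rewrite e2 (inj_eq i2).
Qed.

Lemma chain n m (phi : {set 'I_m} -> 'S_n) V E : injective phi ->
  E = [set (phi A, phi (a |: A)) | A : {set 'I_m}, a : 'I_m in ~: A] ->
  forall p A, path_in V E (phi A) p -> exists s : seq 'I_m,
   [/\ uniq s, all (fun a => a \notin A) s, size s = size p &
   forall k, k <= size p -> nth (phi A) (phi A :: p) k =
       phi (A :|: [set x in s | index x s < k])].
Proof.
move=> i HE; elim=> [|y p IH] A /=.
  move=> _; exists [::]; split => // k; rewrite leqn0 => /eqP -> /=.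
  by congr phi; apply/setP => x; rewrite !inE /= orbF.
case/andP => [/andP [_ inE'] hp]; move: inE'; rewrite HE.
case/imset2P => B a _; rewrite inE => aB [e1 e2]; move: (i _ _ e1) => e1'; subst B y.
have [s [u al sz hn]] := IH _ hp.
have as' : a \notin s by apply/negP => /(allP al); rewrite !inE eqxx.
exists (a :: s); split => //=.
- by rewrite as' u.
- rewrite aB /=; apply/allP => x /(allP al); rewrite !inE negb_or; by case/andP.
- by rewrite sz.
- case=> [|k] /=.
    by move=> _; congr phi; apply/setP => x; rewrite !inE /=; case: (a == x); rewrite ?andbF ?orbF.
  rewrite ltnS => kp; rewrite (set_nth_default (phi (a |: A))); last by rewrite /=; lia.
  rewrite hn //; congr phi; apply/setP => x; rewrite !inE /=.
  case: (eqVneq x a) => [->|xa] /=; first by rewrite orbT.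
  by rewrite ltnS.
Qed.

Lemma reindex n m (phi : {set 'I_m} -> 'S_n) V E x y p :
  injective phi ->
  E = [set (phi A, phi (a |: A)) | A : {set 'I_m}, a : 'I_m in ~: A] ->
  phi set0 = x -> phi setT = y -> path_in V E x p -> last x p = y ->
  m = size p /\ exists s : {perm 'I_m},
    forall k, k <= m -> phi [set s j | j in init m k] = nth x (x :: p) k.
Proof.
move=> i HE h0 hT hp hl; rewrite -h0 in hp.
have [s [u al sz hn]] := chain i HE hp.
have idx : forall z, z \in s -> index z s < size s by move=> z; rewrite index_mem.
have Hall : [set z in s] = setT.
  apply: i; rewrite hT -hl (last_nth x) -h0 hn // set0U; congr phi.
  apply/setP => z; rewrite !inE; case zs: (z \in s) => //=; by rewrite -sz (idx z zs).
have hm : size s = m.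
  move/card_uniqP: u => <-; rewrite -cardsE Hall cardsT card_ord //.
split; first by rewrite -hm.
pose f := fun k : 'I_m => nth k s k.
have fi : injective f.
  move=> j k; rewrite /f (set_nth_default k); last by rewrite hm.
  move/eqP; rewrite nth_uniq ?hm //; by move/eqP/val_inj.
exists (perm fi) => k km.
rewrite -h0 hn; last by rewrite -sz hm.
rewrite set0U; congr phi.
apply/setP => z; rewrite inE; apply/imsetP/andP.
- case=> j; rewrite inE => jk ->; rewrite permE /f.
  have js : j < size s by rewrite hm.
  by rewrite mem_nth // index_uniq.
- case=> zs zk; have zm : index z s < m by move: (idx z zs); rewrite hm.
  exists (Ordinal zm); first by rewrite inE.
  by rewrite permE /f /= nth_index.
Qed.

Lemma perm_imsetK m (s : {perm 'I_m}) (A : {set 'I_m}) :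
  [set s x | x in [set (s^-1)%g x | x in A]] = A.
Proof.
by rewrite -imset_comp (eq_imset _ (fun x => permKV s x)) imset_id.
Qed.

Lemma transfer n m (phi1 phi2 : {set 'I_m} -> 'S_n) (s1 s2 : {perm 'I_m}) :
  (forall B : {set 'I_m}, phi1 [set s1 j | j in B] = phi2 [set s2 j | j in B]) ->
  [set phi1 A | A : {set 'I_m}] \subset [set phi2 A | A : {set 'I_m}] /\
  [set (phi1 A, phi1 (a |: A)) | A : {set 'I_m}, a : 'I_m in ~: A] \subset
  [set (phi2 A, phi2 (a |: A)) | A : {set 'I_m}, a : 'I_m in ~: A].
Proof.
move=> H; split; apply/subsetP.
- move=> _ /imsetP [A _ ->]; rewrite -(perm_imsetK s1 A) H.
  by apply/imsetP; eexists.
- move=> _ /imset2P [A a _ aA ->].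
  rewrite -(perm_imsetK s1 A) -{1}(permKV s1 a) -imsetU1 !H imsetU1.
  apply/imset2P; exists [set s2 j | j in [set (s1^-1)%g x | x in A]] (s2 ((s1^-1)%g a)) => //.
  move: aA; rewrite !inE => aA; rewrite (mem_imset _ _ (@perm_inj _ s2)) (mem_imset _ _ (@perm_inj _ (s1^-1)%g)) //.
Qed.

Theorem lemma3p3 (n : nat) (x y : 'S_n) (p : seq 'S_n) :
  bruhat_path x p -> last x p = y ->
  forall (m1 m2 : nat) (V1 V2 : {set 'S_n}) (E1 E2 : {set 'S_n * 'S_n}),
    is_hypercube m1 V1 E1 x y -> is_hypercube m2 V2 E2 x y ->
    path_in V1 E1 x p -> path_in V2 E2 x p ->
    V1 = V2 /\ E1 = E2.
Proof.
move=> _ hl m1 m2 V1 V2 E1 E2 [phi1 [i1 hV1 [hE1 ed1] h01 hT1]]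
  [phi2 [i2 hV2 [hE2 ed2] h02 hT2]] pin1 pin2.
have [hm1 [s1 hs1]] := @reindex n m1 phi1 V1 E1 x y p i1 hE1 h01 hT1 pin1 hl.
have [hm2 [s2 hs2]] := @reindex n m2 phi2 V2 E2 x y p i2 hE2 h02 hT2 pin2 hl.
subst m1 m2.
set m := size p in phi1 phi2 i1 i2 hV1 hV2 hE1 hE2 ed1 ed2 h01 h02 hT1 hT2 s1 s2 hs1 hs2.
have edg : forall (phi : {set 'I_m} -> 'S_n) (s : {perm 'I_m}) E,
    E = [set (phi A, phi (a |: A)) | A : {set 'I_m}, a : 'I_m in ~: A] ->
    (forall e, e \in E -> bruhat_edge e.1 e.2) ->
    forall (B : {set 'I_m}) b, b \notin B ->
    bruhat_edge (phi [set s j | j in B]) (phi [set s j | j in b |: B]).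
  move=> phi s E hE ed B b bB; rewrite imsetU1.
  apply: (ed (phi [set s j | j in B], phi (s b |: [set s j | j in B]))).
  rewrite hE; apply/imset2P; exists [set s j | j in B] (s b) => //.
  by rewrite inE (mem_imset _ _ (@perm_inj _ s)).
have key := @cube_unique n m (fun B => phi1 [set s1 j | j in B])
  (fun B => phi2 [set s2 j | j in B]).
have eqpsi : forall B : {set 'I_m}, phi1 [set s1 j | j in B] = phi2 [set s2 j | j in B].
  apply: key.
  - by move=> B C /i1 /(imset_inj (@perm_inj _ s1)).
  - by move=> B C /i2 /(imset_inj (@perm_inj _ s2)).
  - exact: edg hE1 ed1.
  - exact: edg hE2 ed2.
  - by move=> k km; rewrite hs1 // hs2.
have [t1 t2] := transfer eqpsi.
have [t3 t4] := transfer (fun B => esym (eqpsi B)).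
by split; apply/eqP; rewrite ?hV1 ?hV2 ?hE1 ?hE2 eqEsubset ?t1 ?t2 ?t3 ?t4.
Qed.
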